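(* For all sufficiently large $n$ one has $k_n>0$; setting $u_n=k_n^{1/2}\langle k_n\theta\rangle$ and $v_n=k_n^{1/2}\langle k_n\theta^2\rangle$ for such $n$, $$\lim_{n\to\infty}\Big((\theta u_n-2v_n)^2+(3\theta^2-4p)u_n^2\Big)=\frac{4d^3}{3\theta^2-p};$$ that is, the points $(u_n,v_n)$ approach the ellipse $(\theta x-2y)^2+(3\theta^2-4p)x^2=\frac{4d^3}{3\theta^2-p}$.
   Context: Standing setup: $p,q\in\mathbb{Z}$ are such that $x^3-px-q$ is irreducible over $\mathbb{Q}$ with exactly one real root $\theta$ (one has $3\theta^2-4p>0$ and $3\theta^2-p>0$). $K=\mathbb{Q}(\theta)\subset\mathbb{R}$, $\mathcal{O}_K$ its ring of integers. $d$ is a positive integer with $\mathcal{O}_K\subseteq\frac1d\mathbb{Z}[\theta]$. $\lambda\in\mathcal{O}_K$ is a unit with $\lambda>1$. For $n\ge1$ the rationals $a_n,b_n,c_n$ are defined by $a_n+b_n\theta+c_n\theta^2=\lambda^n$, and $k_n=dc_n$. For $x\in\mathbb{R}$, $\langle x\rangle=x-\lfloor x+\tfrac12\rfloor$. *)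

(* Defs.v *)
From mathcomp Require Import all_boot all_order all_algebra.
From Stdlib Require Import ZArith Reals.

Local Open Scope ring_scope.

Definition Z2int (z : Z) : int :=
  match z with
  | Z0 => 0
  | Zpos n => (Pos.to_nat n)%:Z
  | Zneg n => - (Pos.to_nat n)%:Z
  end.

Definition cubic_irreducible_Q (p q : Z) : Prop :=
  irreducible_poly ('X^3 - ((Z2int p)%:~R : rat)%:P * 'X - ((Z2int q)%:~R : rat)%:P
                    : {poly rat}).

Local Close Scope ring_scope.
Local Open Scope R_scope.

Definition is_rat (r : R) : Prop :=
  exists (z : Z) (m : positive), r = IZR z / IZR (Zpos m).

Definition is_alg_int (r : R) : Prop :=
  exists (n : nat) (c : nat -> Z),
    r ^ (S n) + sum_f_R0 (fun i => IZR (c i) * r ^ i) n = 0.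

Definition in_K (theta r : R) : Prop :=
  exists a b c : R, is_rat a /\ is_rat b /\ is_rat c /\
    r = a + b * theta + c * theta ^ 2.

Definition in_OK (theta r : R) : Prop := in_K theta r /\ is_alg_int r.

Definition in_dZtheta (d : Z) (theta r : R) : Prop :=
  exists a b c : Z, r = (IZR a + IZR b * theta + IZR c * theta ^ 2) / IZR d.

Definition is_unit_OK (theta r : R) : Prop :=
  r <> 0 /\ in_OK theta r /\ in_OK theta (/ r).

(* <x> = x - floor(x + 1/2); Int_part is the floor function *)
Definition nearest_dev (x : R) : R := x - IZR (Int_part (x + / 2)).

(* Main.v *)
Require Import Defs.
From Stdlib Require Import ZArith Reals.
From Stdlib Require Import Lra Lia.
From mathcomp Require all_boot all_order all_algebra.
From mathcomp Require Rstruct.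

Module MC.
Import mathcomp.boot.all_boot mathcomp.order.all_order mathcomp.algebra.all_algebra mathcomp.reals_stdlib.Rstruct.
Import GRing.Theory Num.Theory.
Local Open Scope ring_scope.

Definition int2Z (z : int) : Z :=
  match z with Posz n => Z.of_nat n | Negz n => Z.opp (Z.of_nat n.+1) end.

Lemma IZR_int2Z (z : int) : IZR (int2Z z) = (z%:~R : R).
Proof.
case: z => n; rewrite /int2Z.
  by rewrite -INR_IZR_INZ INRE.
by rewrite opp_IZR -INR_IZR_INZ INRE NegzE mulrNz.
Qed.

Lemma Z2int_R (z : Z) : ((Z2int z)%:~R : R) = IZR z.
Proof.
case: z => [|n|n] //=.
  by rewrite IZRposE INRE Pos_to_natE.
rewrite mulrNz.
have -> : IZR (Zneg n) = Ropp (IZR (Zpos n)) by [].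
by rewrite IZRposE INRE Pos_to_natE.
Qed.

Lemma sumf_big (g : nat -> R) (m : nat) : sum_f_R0 g m = \sum_(i < m.+1) g i.
Proof.
elim: m => [|m IH]; first by rewrite big_ord_recr big_ord0 /= add0r.
by rewrite /= IH [in RHS]big_ord_recr.
Qed.

Lemma algint_pow (r : R) (n : nat) : is_alg_int r -> is_alg_int (pow r n).
Proof.
move=> [m [c Hc]].
rewrite sumf_big RpowE in Hc.
have szm (p0 : {poly int}) : size (map_poly (intr : int -> R) p0) = size p0.
  by apply: size_map_inj_poly; [exact: intr_inj | exact: mulr0z].
pose h : {poly int} := \poly_(i < m.+2) (if i == m.+1 then 1 else Z2int (c i)).
have szh : size h = m.+2 by rewrite size_poly_eq //= eqxx.
have hmon : h \is monic.
  by rewrite monicE lead_coefE szh coef_poly ltnSn eqxx.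
have hr : (map_poly intr h).[r] = 0.
  rewrite (horner_coef_wide _ (n := m.+2)); last by rewrite szm szh.
  rewrite big_ord_recr /= coef_map coef_poly ltnSn eqxx /= -[RHS]Hc RplusE addrC.
  congr (_ + _); first by rewrite mulr1z mul1r.
  apply: eq_bigr => i _; rewrite coef_map coef_poly ltnS ltnW //= ltn_eqF //.
  by rewrite Z2int_R RpowE RmultE.
pose W k : {poly int} := Pdiv.Ring.rmodp 'X^k h.
have HW k : r ^+ k = \sum_(i < m.+1) ((W k)`_i)%:~R * r ^+ i.
  have E := Pdiv.RingMonic.rdivp_eq hmon 'X^k.
  have := congr1 (fun p => (map_poly intr p).[r]) E.
  rewrite /= map_polyXn hornerXn rmorphD rmorphM /= hornerD hornerM hr mulr0 add0r.
  move->; rewrite (horner_coef_wide _ (n := m.+1)).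
    by apply: eq_bigr => i _; rewrite coef_map.
  rewrite szm -ltnS -szh Pdiv.Ring.ltn_rmodp.
  by rewrite -size_poly_eq0 szh.
pose A : 'M[int]_(m.+1) := \matrix_(i, j) (W (n + j))`_i.
pose v : 'rV[R]_(m.+1) := \row_j r ^+ j.
have eig : eigenvalue (map_mx intr A) (r ^+ n).
  apply/eigenvalueP; exists v.
    apply/rowP => j; rewrite !mxE.
    rewrite -exprD HW; apply: eq_bigr => i _.
    by rewrite !mxE mulrC.
  apply/negP => /eqP/rowP/(_ ord0); rewrite !mxE expr0 => /eqP.
  by rewrite oner_eq0.
move: eig; rewrite eigenvalue_root_char -map_char_poly.
set P := char_poly A => /rootP.
have szP : size P = m.+2 by rewrite size_char_poly.
have lP : P`_m.+1 = 1.
  by have /monicP := char_poly_monic A; rewrite lead_coefE szP.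
rewrite (horner_coef_wide _ (n := m.+2)); last by rewrite szm szP.
rewrite big_ord_recr /= coef_map lP -[X in _ + X * _]/(1%:~R) mulr1z mul1r => H.
exists m, (fun i => int2Z P`_i).
rewrite sumf_big !RpowE RplusE -[RHS]H addrC; congr (_ + _).
apply: eq_bigr => i _; rewrite coef_map IZR_int2Z RmultE RpowE.
by rewrite -exprM mulnC exprM.
Qed.

End MC.

Module MC1.
Import mathcomp.boot.all_boot mathcomp.order.all_order mathcomp.algebra.all_algebra mathcomp.reals_stdlib.Rstruct.
Import GRing.Theory Num.Theory.
Local Open Scope ring_scope.

Lemma Z2int_R (z : Z) : ((Z2int z)%:~R : R) = IZR z.
Proof.
case: z => [|n|n] //=.
  by rewrite IZRposE INRE Pos_to_natE.
rewrite mulrNz.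
have -> : IZR (Zneg n) = Ropp (IZR (Zpos n)) by [].
by rewrite IZRposE INRE Pos_to_natE.
Qed.

Lemma Z2int_eq0 (z : Z) : ((Z2int z)%:~R : rat) = 0 -> z = Z0.
Proof.
move=> /eqP; rewrite intr_eq0 => /eqP H.
apply: eq_IZR_R0; rewrite -Z2int_R H; exact: mulr0z.
Qed.

Lemma lin_indep (p q : Z) (t : R) : cubic_irreducible_Q p q ->
  Rminus (Rminus (pow t 3) (Rmult (IZR p) t)) (IZR q) = 0 ->
  forall z1 z2 z3 : Z,
  Rplus (Rplus (IZR z1) (Rmult (IZR z2) t)) (Rmult (IZR z3) (pow t 2)) = 0 ->
  z1 = Z0 /\ z2 = Z0 /\ z3 = Z0.
Proof.
move=> Hirr Hf z1 z2 z3 Hz.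
set f := ('X^3 - ((Z2int p)%:~R : rat)%:P * 'X - ((Z2int q)%:~R : rat)%:P : {poly rat}).
pose E (i : nat) : rat := (Z2int (if i == 0%N then z1 else if i == 1%N then z2 else z3))%:~R.
pose g : {poly rat} := \poly_(i < 3) E i.
case: (boolP (g == 0)) => [/eqP g0 | gn0].
  have c0 := congr1 (fun r : {poly rat} => r`_0) g0; have c1 := congr1 (fun r : {poly rat} => r`_1) g0;
  have c2 := congr1 (fun r : {poly rat} => r`_2) g0.
  rewrite /= coef_poly coef0 /E /= in c0; rewrite /= coef_poly coef0 /E /= in c1;
  rewrite /= coef_poly coef0 /E /= in c2.
  by split; [exact: Z2int_eq0 | split; exact: Z2int_eq0].
exfalso.
have szf : (3 < size f)%N.
  rewrite ltnNge; apply/negP => /(nth_default (0 : rat)).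
  rewrite /f !coefE /=.
  rewrite mulr0 !subr0 => /eqP; by rewrite oner_eq0.
have cop : coprimep f g.
  rewrite /coprimep; case: (boolP (size (gcdp f g) == 1%N)) => // sz.
  have := Hirr.2 _ sz (dvdp_gcdl f g) => eq.
  have : f %| g by rewrite -(eqp_dvdl _ eq) dvdp_gcdr.
  move/(dvdp_leq gn0) => H.
  have := leq_trans H (size_poly 3 E).
  by rewrite leqNgt szf.
have copR : coprimep (map_poly (ratr : rat -> R) f) (map_poly (ratr : rat -> R) g).
  by rewrite coprimep_map.
have rootf : root (map_poly (ratr : rat -> R) f) t.
  apply/rootP; rewrite /f !rmorphB /= rmorphXn rmorphM /= !map_polyC map_polyX /=.
  rewrite !hornerE !ratr_int !Z2int_R -Hf.
  by rewrite RminusE RminusE RmultE RpowE.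
have := coprimep_root copR rootf.
rewrite (horner_coef_wide _ (n := 3)); last by rewrite size_map_poly size_poly.
rewrite !big_ord_recr big_ord0 /= !coef_map /g !coef_poly /= /E /= !ratr_int !Z2int_R.
rewrite add0r expr0 mulr1 expr1 -RpowE -RmultE -RmultE -RplusE -RplusE Hz.
by rewrite eqxx.
Qed.
End MC1.

Open Scope R_scope.

Definition algint_pow : forall (r : R) (n : nat), is_alg_int r -> is_alg_int (r ^ n) := MC.algint_pow.
Definition lin_indep : forall (p q : Z) (t : R), cubic_irreducible_Q p q ->
  t ^ 3 - IZR p * t - IZR q = 0 ->
  forall z1 z2 z3 : Z, IZR z1 + IZR z2 * t + IZR z3 * t ^ 2 = 0 ->
  z1 = 0%Z /\ z2 = 0%Z /\ z3 = 0%Z := MC1.lin_indep.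

Definition Nf (P Q a b c : R) := a^3 + 2*P*a^2*c + P^2*a*c^2 - P*a*b^2 - 3*Q*a*b*c + Q*b^3 + Q^2*c^3 - P*Q*b*c^2.
Definition Gq (t P a b c : R) := (c*t^2 - a - P*c)^2 - t*(c*t - b)*(c*t^2 - a - P*c) + (t^2-P)*(c*t - b)^2.
Definition vl (t a b c : R) := a + b*t + c*t^2.
Definition mulA (P Q a b c a' b' c' : R) := a*a' + Q*(b*c'+c*b').
Definition mulB (P Q a b c a' b' c' : R) := a*b'+b*a' + P*(b*c'+c*b') + Q*c*c'.
Definition mulC (P Q a b c a' b' c' : R) := a*c'+b*b'+c*a' + P*c*c'.

Lemma NG t P Q a b c : t^3 - P*t - Q = 0 -> Nf P Q a b c = vl t a b c * Gq t P a b c.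
Proof. intro H. unfold Nf, Gq, vl.
assert (E : (a^3 + 2*P*a^2*c + P^2*a*c^2 - P*a*b^2 - 3*Q*a*b*c + Q*b^3 + Q^2*c^3 - P*Q*b*c^2) - (a + b*t + c*t^2) * ((c*t^2 - a - P*c)^2 - t*(c*t - b)*(c*t^2 - a - P*c) + (t^2-P)*(c*t - b)^2) = - (b^3 - 3*a*b*c + Q*c^3 - P*b*c^2 - t*P*c^3 + t^3*c^3)*(t^3 - P*t - Q)) by ring.
rewrite H in E. lra. Qed.

Lemma Nmul P Q a b c a' b' c' : Nf P Q (mulA P Q a b c a' b' c') (mulB P Q a b c a' b' c') (mulC P Q a b c a' b' c') = Nf P Q a b c * Nf P Q a' b' c'.
Proof. unfold Nf, mulA, mulB, mulC. ring. Qed.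

Lemma vl_mul t P Q a b c a' b' c' : t^3 - P*t - Q = 0 ->
  vl t (mulA P Q a b c a' b' c') (mulB P Q a b c a' b' c') (mulC P Q a b c a' b' c') = vl t a b c * vl t a' b' c'.
Proof. intro H. unfold vl, mulA, mulB, mulC.
assert (E : (a*a' + Q*(b*c'+c*b') + (a*b'+b*a' + P*(b*c'+c*b') + Q*c*c')*t + (a*c'+b*b'+c*a' + P*c*c')*t^2) - (a + b*t + c*t^2) * (a' + b'*t + c'*t^2) = - (b*c'+c*b' + c*c'*t)*(t^3 - P*t - Q)) by ring.
rewrite H in E. lra. Qed.

Lemma Gq_nonneg t P a b c : 0 < 3*t^2 - 4*P -> 0 <= Gq t P a b c.
Proof. intro H. unfold Gq.
set (e := c*t - b). set (g := c*t^2 - a - P*c).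
assert (E : g^2 - t*e*g + (t^2-P)*e^2 = (g - t*e/2)^2 + (3*t^2-4*P)/4 * e^2) by (field).
rewrite E. assert (0 <= (g - t*e/2)^2) by (apply pow2_ge_0).
assert (0 <= e^2) by (apply pow2_ge_0).
assert (0 <= (3*t^2-4*P)/4 * e^2) by (apply Rmult_le_pos; lra). lra. Qed.

Fixpoint pw (P Q a b c : R) (n : nat) : R * R * R :=
  match n with
  | O => (1, 0, 0)
  | S n' => let r := pw P Q a b c n' in
      (mulA P Q (fst (fst r)) (snd (fst r)) (snd r) a b c,
       mulB P Q (fst (fst r)) (snd (fst r)) (snd r) a b c,
       mulC P Q (fst (fst r)) (snd (fst r)) (snd r) a b c)
  end.
Definition pA P Q a b c n := fst (fst (pw P Q a b c n)).
Definition pB P Q a b c n := snd (fst (pw P Q a b c n)).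
Definition pC P Q a b c n := snd (pw P Q a b c n).

Lemma pw_val t P Q a b c n : t^3 - P*t - Q = 0 ->
  vl t (pA P Q a b c n) (pB P Q a b c n) (pC P Q a b c n) = (vl t a b c)^n.
Proof. intro H. induction n as [|n IH].
- unfold pA, pB, pC, vl; simpl; ring.
- unfold pA, pB, pC in *; simpl. rewrite vl_mul by exact H. rewrite IH. ring. Qed.

Lemma pw_N P Q a b c n : Nf P Q (pA P Q a b c n) (pB P Q a b c n) (pC P Q a b c n) = (Nf P Q a b c)^n.
Proof. induction n as [|n IH].
- unfold pA, pB, pC, Nf; simpl; ring.
- unfold pA, pB, pC in *; simpl. rewrite Nmul, IH. ring. Qed.

Lemma pos_gt0 (m : positive) : 0 < IZR (Zpos m).
Proof. apply IZR_lt. lia. Qed.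

Lemma rat_IZR z : is_rat (IZR z).
Proof. exists z, 1%positive. change (IZR (Zpos 1)) with 1. field. Qed.

Lemma rat_plus x y : is_rat x -> is_rat y -> is_rat (x + y).
Proof. intros [z1 [m1 H1]] [z2 [m2 H2]].
exists (z1 * Zpos m2 + z2 * Zpos m1)%Z, (m1 * m2)%positive.
change (Zpos (m1 * m2)) with (Zpos m1 * Zpos m2)%Z.
rewrite plus_IZR, !mult_IZR, H1, H2.
pose proof (pos_gt0 m1); pose proof (pos_gt0 m2). field; lra. Qed.

Lemma rat_mult x y : is_rat x -> is_rat y -> is_rat (x * y).
Proof. intros [z1 [m1 H1]] [z2 [m2 H2]].
exists (z1 * z2)%Z, (m1 * m2)%positive.
change (Zpos (m1 * m2)) with (Zpos m1 * Zpos m2)%Z.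
rewrite !mult_IZR, H1, H2.
pose proof (pos_gt0 m1); pose proof (pos_gt0 m2). field; lra. Qed.

Lemma rat_opp x : is_rat x -> is_rat (- x).
Proof. intros [z1 [m1 H1]]. exists (- z1)%Z, m1. rewrite opp_IZR, H1. field.
pose proof (pos_gt0 m1); lra. Qed.

Lemma rat_minus x y : is_rat x -> is_rat y -> is_rat (x - y).
Proof. intros; unfold Rminus; apply rat_plus; auto; apply rat_opp; auto. Qed.

Lemma pw_rat P Q a b c n : is_rat P -> is_rat Q -> is_rat a -> is_rat b -> is_rat c ->
  is_rat (pA P Q a b c n) /\ is_rat (pB P Q a b c n) /\ is_rat (pC P Q a b c n).
Proof. intros HP HQ Ha Hb Hc. induction n as [|n [IH1 [IH2 IH3]]].
- unfold pA, pB, pC; simpl. repeat split; [change 1 with (IZR 1) | change 0 with (IZR 0) ..]; apply rat_IZR.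
- unfold pA, pB, pC in *; simpl. unfold mulA, mulB, mulC.
  repeat split; repeat first [apply rat_plus | apply rat_mult]; auto. Qed.

Lemma rat_indep t :
  (forall z1 z2 z3 : Z, IZR z1 + IZR z2 * t + IZR z3 * t ^ 2 = 0 -> z1 = 0%Z /\ z2 = 0%Z /\ z3 = 0%Z) ->
  forall x y z, is_rat x -> is_rat y -> is_rat z -> x + y * t + z * t^2 = 0 -> x = 0 /\ y = 0 /\ z = 0.
Proof. intros Hli x y z [z1 [m1 H1]] [z2 [m2 H2]] [z3 [m3 H3]] H.
pose proof (pos_gt0 m1); pose proof (pos_gt0 m2); pose proof (pos_gt0 m3).
destruct (Hli (z1 * Zpos m2 * Zpos m3) (z2 * Zpos m1 * Zpos m3) (z3 * Zpos m1 * Zpos m2))%Z as [E1 [E2 E3]].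
- rewrite !mult_IZR.
  replace 0 with ((x + y * t + z * t^2) * (IZR (Zpos m1) * IZR (Zpos m2) * IZR (Zpos m3))) by (rewrite H; ring).
  rewrite H1, H2, H3. field. repeat split; lra.
- assert (z1 = 0%Z) by nia. assert (z2 = 0%Z) by nia. assert (z3 = 0%Z) by nia. subst.
  unfold Rdiv. repeat split; ring. Qed.

Lemma uniq3 t :
  (forall z1 z2 z3 : Z, IZR z1 + IZR z2 * t + IZR z3 * t ^ 2 = 0 -> z1 = 0%Z /\ z2 = 0%Z /\ z3 = 0%Z) ->
  forall a b c a' b' c', is_rat a -> is_rat b -> is_rat c -> is_rat a' -> is_rat b' -> is_rat c' ->
  vl t a b c = vl t a' b' c' -> a = a' /\ b = b' /\ c = c'.
Proof. intros Hli a b c a' b' c' ? ? ? ? ? ? H. unfold vl in H.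
destruct (rat_indep t Hli (a - a') (b - b') (c - c')) as [E1 [E2 E3]];
  try (apply rat_minus; assumption). lra. lra. Qed.

Lemma nearest_dev_shift (z : Z) (y : R) : Rabs y < /2 -> nearest_dev (IZR z + y) = y.
Proof. intro H. unfold nearest_dev.
apply Rabs_def2 in H. destruct H.
rewrite <- (Int_part_spec (IZR z + y + /2) z); [ring | lra]. Qed.

Lemma pow_bounded_gt1 x M : 1 < x -> (forall n, x ^ n <= M) -> False.
Proof. intros H1 H2.
destruct (Pow_x_infinity x ltac:(rewrite Rabs_right; lra) (M + 1)) as [N HN].
specialize (HN N (le_n N)). specialize (H2 N).
rewrite Rabs_right in HN. lra. apply Rle_ge, pow_le; lra. Qed.
Lemma abs_lt_of_sq (x eta : R) : 0 < eta -> x^2 < eta^2 -> Rabs x < eta.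
Proof. intros H1 H2. apply Rabs_def1; nra. Qed.

Lemma small_eg (t P D lam : R) (k : nat -> R) (HS : 0 < 3 * t^2 - 4 * P) (Hl : 1 < lam)
  (key : forall n, (1 <= n)%nat -> exists (e g : R) (Az Bz : Z),
      k n * (3 * t^2 - P) = D * (lam^n + g + e * t) /\ k n * t = IZR Bz + D * e /\
      k n * t^2 = IZR Az + D * g /\ (g^2 - t*e*g + (t^2 - P)*e^2) * lam^n = 1) :
  forall eta, 0 < eta -> exists N, forall n, (N <= n)%nat -> (1 <= n)%nat ->
   exists (e g : R) (Az Bz : Z),
      k n * (3 * t^2 - P) = D * (lam^n + g + e * t) /\ k n * t = IZR Bz + D * e /\
      k n * t^2 = IZR Az + D * g /\ (g^2 - t*e*g + (t^2 - P)*e^2) * lam^n = 1 /\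
      Rabs e < eta /\ Rabs g < eta.
Proof.
intros eta Heta.
set (S := 3 * t^2 - 4 * P) in *.
assert (Ht2 : 0 <= t^2) by (apply pow2_ge_0).
set (K := 4/S + 2 + 2*t^2/S).
assert (HK : 0 < K).
{ unfold K. assert (0 < 4/S) by (apply Rdiv_lt_0_compat; lra).
  assert (0 <= 2*t^2/S) by (apply Rmult_le_pos; [lra | left; apply Rinv_0_lt_compat; lra]). lra. }
assert (Hil : Rabs (/lam) < 1).
{ rewrite Rabs_right. apply (Rmult_lt_reg_l lam). lra. rewrite Rinv_r; lra.
  left; apply Rinv_0_lt_compat; lra. }
assert (Hy : 0 < eta^2 / K) by (apply Rdiv_lt_0_compat; [apply pow_lt; lra | lra]).
destruct (pow_lt_1_zero (/lam) Hil (eta^2/K) Hy) as [N HN].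
exists N. intros n hN h1.
destruct (key n h1) as [e [g [Az [Bz [E1 [E2 [E3 E4]]]]]]].
exists e, g, Az, Bz. do 4 (split; [assumption|]).
set (w := (/lam)^n) in *.
assert (Hw : 0 < w) by (apply pow_lt; apply Rinv_0_lt_compat; lra).
assert (Hwlam : w * lam^n = 1).
{ unfold w. rewrite <- Rpow_mult_distr, Rinv_l by lra. apply pow1. }
assert (Hln : 0 < lam^n) by (apply pow_lt; lra).
assert (hG : g^2 - t*e*g + (t^2 - P)*e^2 = w).
{ apply (Rmult_eq_reg_r (lam^n)); [lra | apply Rgt_not_eq; lra]. }
specialize (HN n hN). change ((/lam)^n) with w in HN. rewrite Rabs_right in HN by lra.
assert (hKw : K * w < eta^2).
{ apply (Rmult_lt_reg_r (/K)). apply Rinv_0_lt_compat; lra.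
  replace (K * w * / K) with w by (field; lra). exact HN. }
assert (hdec : (g - t*e/2)^2 + S/4 * e^2 = w) by (rewrite <- hG; unfold S; field).
assert (q1 : 0 <= (g - t*e/2)^2) by (apply pow2_ge_0).
assert (q2 : 0 <= e^2) by (apply pow2_ge_0).
assert (he2 : e^2 <= 4/S * w).
{ replace (e^2) with (4/S * (S/4 * e^2)) by (field; lra).
  apply Rmult_le_compat_l. left; apply Rdiv_lt_0_compat; lra. lra. }
assert (q3 : 0 <= S/4*e^2) by (apply Rmult_le_pos; lra).
assert (hg2 : g^2 <= 2 * w + t^2/2 * e^2).
{ assert (E : g^2 = 2*(g - t*e/2)^2 + t^2/2*e^2 - (g - t*e)^2) by field.
  assert (0 <= (g - t*e)^2) by (apply pow2_ge_0). lra. }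
assert (hte : t^2/2 * e^2 <= t^2/2 * (4/S * w)).
{ apply Rmult_le_compat_l; lra. }
assert (hKw' : K * w = 4/S*w + 2*w + t^2/2*(4/S*w)) by (unfold K; field; lra).
assert (0 <= t^2/2*(4/S*w)).
{ apply Rmult_le_pos. lra. left. apply Rmult_lt_0_compat; [apply Rdiv_lt_0_compat|]; lra. }
split; apply abs_lt_of_sq; lra.
Qed.

Lemma neg_abs_le (x : R) : - Rabs x <= x.
Proof. pose proof (Rle_abs (- x)) as H. rewrite Rabs_Ropp in H. lra. Qed.

Lemma kpos (t D Dd lam kn e g eta : R) : 0 < D -> 0 < Dd -> 1 <= lam ->
  kn * Dd = D * (lam + g + e * t) -> Rabs e < eta -> Rabs g < eta ->
  eta * (1 + Rabs t) <= /2 -> 0 < kn.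
Proof. intros HD HDd Hl E He Hg Heta.
assert (h1 : Rabs (e * t) <= eta * Rabs t).
{ rewrite Rabs_mult. apply Rmult_le_compat_r. apply Rabs_pos. lra. }
assert (h2 : - Rabs (e*t) <= e * t) by (apply neg_abs_le).
assert (h3 : - Rabs g <= g) by (apply neg_abs_le).
assert (h4 : 0 < lam + g + e * t) by nra.
assert (h5 : 0 < kn * Dd) by (rewrite E; apply Rmult_lt_0_compat; lra).
nra. Qed.

Lemma analysis_part (t P D lam : R) (k : nat -> R) (HS : 0 < 3 * t^2 - 4 * P)
  (HDd : 0 < 3 * t^2 - P) (HD : 0 < D) (Hl : 1 < lam)
  (key : forall n, (1 <= n)%nat -> exists (e g : R) (Az Bz : Z),
      k n * (3 * t^2 - P) = D * (lam^n + g + e * t) /\ k n * t = IZR Bz + D * e /\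
      k n * t^2 = IZR Az + D * g /\ (g^2 - t*e*g + (t^2 - P)*e^2) * lam^n = 1) :
  (exists N : nat, forall n : nat, (N <= n)%nat -> 0 < k n) /\
  Un_cv (fun n : nat =>
           let u := sqrt (k n) * nearest_dev (k n * t) in
           let v := sqrt (k n) * nearest_dev (k n * t ^ 2) in
           (t * u - 2 * v) ^ 2 + (3 * t ^ 2 - 4 * P) * u ^ 2)
        (4 * D ^ 3 / (3 * t ^ 2 - P)).
Proof.
assert (Hat : 0 < 1 + Rabs t) by (pose proof (Rabs_pos t); lra).
assert (Hlp : forall n, 1 <= lam ^ n) by (intro n; apply pow_R1_Rle; lra).
split.
- destruct (small_eg t P D lam k HS Hl key (/(2*(1+Rabs t)))) as [N HN].
  { apply Rinv_0_lt_compat; lra. }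
  exists (max N 1). intros n hn.
  destruct (HN n ltac:(lia) ltac:(lia)) as [e [g [Az [Bz [E1 [E2 [E3 [E4 [He Hg]]]]]]]]].
  apply (kpos t D (3 * t^2 - P) (lam^n) (k n) e g (/(2*(1+Rabs t)))); auto.
  right; field; lra.
- intros eps Heps.
  set (eta := Rmin (Rmin (/(2*(1+Rabs t))) (/(4*D))) (eps * (3 * t^2 - P) / (8 * D^3 * (1+Rabs t)))).
  assert (HD3 : 0 < D^3) by (apply pow_lt; lra).
  assert (Heta1 : eta <= /(2*(1+Rabs t))) by (unfold eta; eapply Rle_trans; [apply Rmin_l | apply Rmin_l]).
  assert (Heta2 : eta <= /(4*D)) by (unfold eta; eapply Rle_trans; [apply Rmin_l | apply Rmin_r]).
  assert (Heta3 : eta <= eps * (3 * t^2 - P) / (8 * D^3 * (1+Rabs t))) by (unfold eta; apply Rmin_r).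
  assert (Hetap : 0 < eta).
  { unfold eta. repeat apply Rmin_glb_lt; try (apply Rinv_0_lt_compat; lra).
    apply Rdiv_lt_0_compat. apply Rmult_lt_0_compat; lra.
    apply Rmult_lt_0_compat; [apply Rmult_lt_0_compat|]; lra. }
  destruct (small_eg t P D lam k HS Hl key eta Hetap) as [N HN].
  exists (max N 1). intros n hn. unfold R_dist. cbv beta zeta.
  destruct (HN n ltac:(lia) ltac:(lia)) as [e [g [Az [Bz [E1 [E2 [E3 [E4 [He Hg]]]]]]]]].
  assert (Hln : 0 < lam ^ n) by (specialize (Hlp n); lra).
  assert (Hk : 0 < k n).
  { apply (kpos t D (3 * t^2 - P) (lam^n) (k n) e g eta); auto.
    apply Rle_trans with (/(2*(1+Rabs t)) * (1 + Rabs t)).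
    apply Rmult_le_compat_r; lra. right; field; lra. }
  assert (HDe : Rabs (D * e) < /2).
  { rewrite Rabs_mult, Rabs_right by lra.
    apply Rle_lt_trans with (D * eta). apply Rmult_le_compat_l; lra.
    apply Rle_lt_trans with (D * /(4*D)). apply Rmult_le_compat_l; lra.
    replace (D * /(4*D)) with (/4) by (field; lra). lra. }
  assert (HDg : Rabs (D * g) < /2).
  { rewrite Rabs_mult, Rabs_right by lra.
    apply Rle_lt_trans with (D * eta). apply Rmult_le_compat_l; lra.
    apply Rle_lt_trans with (D * /(4*D)). apply Rmult_le_compat_l; lra.
    replace (D * /(4*D)) with (/4) by (field; lra). lra. }
  rewrite E2, E3, !nearest_dev_shift by assumption.
  assert (EG : g^2 - t*e*g + (t^2 - P)*e^2 = / lam^n).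
  { apply (Rmult_eq_reg_r (lam^n)). rewrite E4, Rinv_l; [reflexivity | lra]. lra. }
  assert (Ek : k n = D * (lam^n + g + e*t) / (3 * t^2 - P)).
  { rewrite <- E1. field; lra. }
  replace ((t * (sqrt (k n) * (D * e)) - 2 * (sqrt (k n) * (D * g))) ^ 2 +
     (3 * t ^ 2 - 4 * P) * (sqrt (k n) * (D * e)) ^ 2) with
     (sqrt (k n) ^ 2 * D^2 * (4 * (g^2 - t*e*g + (t^2 - P)*e^2))) by ring.
  rewrite pow2_sqrt by lra. rewrite EG, Ek.
  replace (D * (lam ^ n + g + e * t) / (3 * t^2 - P) * D ^ 2 * (4 * / lam ^ n) - 4 * D ^ 3 / (3 * t^2 - P))
    with ((4 * D^3 / (3 * t^2 - P) * / lam^n) * (g + e * t)) by (field; lra).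
  set (c := 4 * D^3 / (3 * t^2 - P) * / lam^n).
  assert (Hc0 : 0 < c).
  { unfold c. apply Rmult_lt_0_compat. apply Rdiv_lt_0_compat; lra. apply Rinv_0_lt_compat; lra. }
  assert (Hc1 : c <= 4 * D^3 / (3 * t^2 - P)).
  { unfold c. rewrite <- (Rmult_1_r (4 * D^3 / (3 * t^2 - P))) at 2. apply Rmult_le_compat_l.
    left; apply Rdiv_lt_0_compat; lra.
    rewrite <- Rinv_1. apply Rinv_le_contravar; [lra | apply Hlp]. }
  assert (HY : Rabs (g + e * t) < eta * (1 + Rabs t)).
  { apply Rle_lt_trans with (Rabs g + Rabs (e * t)). apply Rabs_triang.
    rewrite Rabs_mult.
    assert (Rabs e * Rabs t <= eta * Rabs t) by (apply Rmult_le_compat_r; [apply Rabs_pos | lra]).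
    lra. }
  assert (HY2 : eta * (1 + Rabs t) <= eps * (3 * t^2 - P) / (8 * D^3)).
  { apply Rle_trans with (eps * (3 * t^2 - P) / (8 * D^3 * (1+Rabs t)) * (1 + Rabs t)).
    apply Rmult_le_compat_r; lra. right; field; lra. }
  rewrite Rabs_mult, (Rabs_right c) by lra.
  apply Rle_lt_trans with (4 * D^3 / (3 * t^2 - P) * Rabs (g + e * t)).
  apply Rmult_le_compat_r; [apply Rabs_pos | exact Hc1].
  apply Rlt_le_trans with (4 * D^3 / (3 * t^2 - P) * (eps * (3 * t^2 - P) / (8 * D^3))).
  apply Rmult_lt_compat_l. apply Rdiv_lt_0_compat; lra. lra.
  apply Rle_trans with (eps/2); [right; field; repeat split; lra | lra].
Qed.

Definition NZ (p q A B C : Z) : Z := (A*A*A + 2*p*A*A*C + p*p*A*C*C - p*A*B*B - 3*q*A*B*C + q*B*B*B + q*q*C*C*C - p*q*B*C*C)%Z.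
Lemma NZ_IZR p q A B C : IZR (NZ p q A B C) = Nf (IZR p) (IZR q) (IZR A) (IZR B) (IZR C).
Proof. unfold NZ, Nf. repeat (rewrite ?plus_IZR, ?minus_IZR, ?mult_IZR). ring. Qed.

Theorem mainTheorem18
  (p q : Z) (theta : R) (d : Z) (lambda : R) (a b c : nat -> R)
  (Hirr : cubic_irreducible_Q p q)
  (Hroot : forall x : R, x ^ 3 - IZR p * x - IZR q = 0 <-> x = theta)
  (Hd : (0 < d)%Z)
  (HOK : forall r : R, in_OK theta r -> in_dZtheta d theta r)
  (Hunit : is_unit_OK theta lambda)
  (Hlam : 1 < lambda)
  (Habc : forall n : nat, (1 <= n)%nat ->
     is_rat (a n) /\ is_rat (b n) /\ is_rat (c n) /\
     a n + b n * theta + c n * theta ^ 2 = lambda ^ n) :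
  let k := fun n : nat => IZR d * c n in
  (exists N : nat, forall n : nat, (N <= n)%nat -> 0 < k n) /\
  Un_cv (fun n : nat =>
           let u := sqrt (k n) * nearest_dev (k n * theta) in
           let v := sqrt (k n) * nearest_dev (k n * theta ^ 2) in
           (theta * u - 2 * v) ^ 2 + (3 * theta ^ 2 - 4 * IZR p) * u ^ 2)
        (4 * IZR d ^ 3 / (3 * theta ^ 2 - IZR p)).
Proof.
intros k.
assert (ft : theta ^ 3 - IZR p * theta - IZR q = 0) by (apply Hroot; reflexivity).
pose proof (lin_indep p q theta Hirr ft) as Hli.
assert (tn0 : theta <> 0).
{ intro H0. destruct (Hli 0%Z 1%Z 0%Z) as [_ [E _]]. rewrite H0. ring. discriminate E. }
assert (Ht2 : 0 < theta^2).
{ assert (0 < theta*theta) by (apply Rsqr_pos_lt; exact tn0).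
  replace (theta^2) with (theta*theta) by ring. exact H. }
assert (HS : 0 < 3 * theta^2 - 4 * IZR p).
{ destruct (Rlt_or_le 0 (3 * theta^2 - 4 * IZR p)) as [h|h]; [exact h|exfalso].
  set (s := sqrt (-(3 * theta^2 - 4 * IZR p))).
  assert (hs : s * s = -(3 * theta^2 - 4 * IZR p)) by (apply sqrt_sqrt; lra).
  assert (root : forall y, y^2 + theta*y + theta^2 - IZR p = 0 -> y = theta).
  { intros y hy. apply Hroot.
    assert (E: y^3 - IZR p * y - IZR q - (theta^3 - IZR p*theta - IZR q) = (y - theta)*(y^2 + theta*y + theta^2 - IZR p)) by ring.
    rewrite ft, hy in E. lra. }
  assert (y1 : (-theta + s)/2 = theta).
  { apply root. replace (((- theta + s) / 2) ^ 2 + theta * ((- theta + s) / 2) + theta ^ 2 - IZR p)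
      with ((3 * theta^2 - 4 * IZR p + s * s)/4) by field. rewrite hs. field. }
  assert (y2 : (-theta - s)/2 = theta).
  { apply root. replace (((- theta - s) / 2) ^ 2 + theta * ((- theta - s) / 2) + theta ^ 2 - IZR p)
      with ((3 * theta^2 - 4 * IZR p + s * s)/4) by field. rewrite hs. field. }
  apply tn0. lra. }
assert (HDd : 0 < 3 * theta^2 - IZR p) by (destruct (Rle_or_lt 0 (IZR p)); lra).
destruct d as [|dd|dd]; [lia| |lia].
assert (HD : 0 < IZR (Zpos dd)) by (apply pos_gt0).
set (D := IZR (Zpos dd)) in *.
destruct (Habc 1%nat (le_n 1)) as [ra1 [rb1 [rc1 Hv1]]].
rewrite pow_1 in Hv1.
destruct Hunit as [ln0 [[_ Halg] [[al [be [ga [ral [rbe [rga Hinv]]]]]] Halg']]].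
assert (rp := rat_IZR p). assert (rq := rat_IZR q).
assert (IP : forall a0 b0 c0, is_rat a0 -> is_rat b0 -> is_rat c0 -> is_alg_int (vl theta a0 b0 c0) ->
  forall n, exists A B C : Z,
    pA (IZR p) (IZR q) a0 b0 c0 n = IZR A / D /\ pB (IZR p) (IZR q) a0 b0 c0 n = IZR B / D /\
    pC (IZR p) (IZR q) a0 b0 c0 n = IZR C / D).
{ intros a0 b0 c0 h1 h2 h3 h4 n.
  destruct (pw_rat (IZR p) (IZR q) a0 b0 c0 n rp rq h1 h2 h3) as [r1 [r2 r3]].
  destruct (HOK ((vl theta a0 b0 c0)^n)) as [A [B [C HA]]].
  { split.
    - exists (pA (IZR p) (IZR q) a0 b0 c0 n), (pB (IZR p) (IZR q) a0 b0 c0 n), (pC (IZR p) (IZR q) a0 b0 c0 n).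
      repeat split; auto. rewrite <- (pw_val theta (IZR p) (IZR q) a0 b0 c0 n ft). reflexivity.
    - apply algint_pow; exact h4. }
  exists A, B, C.
  assert (rd : forall z, is_rat (IZR z / D)) by (intro z; exists z, dd; reflexivity).
  apply (uniq3 theta Hli); auto.
  rewrite pw_val by exact ft. rewrite HA. unfold vl. fold D. field. lra. }
assert (IN : forall a0 b0 c0, is_rat a0 -> is_rat b0 -> is_rat c0 -> is_alg_int (vl theta a0 b0 c0) ->
  forall n, exists z : Z, D^3 * Nf (IZR p) (IZR q) (pA (IZR p) (IZR q) a0 b0 c0 n)
     (pB (IZR p) (IZR q) a0 b0 c0 n) (pC (IZR p) (IZR q) a0 b0 c0 n) = IZR z).
{ intros a0 b0 c0 h1 h2 h3 h4 n.
  destruct (IP a0 b0 c0 h1 h2 h3 h4 n) as [A [B [C [E1 [E2 E3]]]]].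
  exists (NZ p q A B C). rewrite NZ_IZR, E1, E2, E3. unfold Nf. field. lra. }
assert (Hpos : forall a0 b0 c0, 0 < vl theta a0 b0 c0 ->
  forall n, 0 <= Nf (IZR p) (IZR q) (pA (IZR p) (IZR q) a0 b0 c0 n)
     (pB (IZR p) (IZR q) a0 b0 c0 n) (pC (IZR p) (IZR q) a0 b0 c0 n)).
{ intros a0 b0 c0 h n. rewrite (NG theta (IZR p) (IZR q)) by exact ft.
  rewrite pw_val by exact ft. apply Rmult_le_pos.
  left; apply pow_lt; exact h. apply Gq_nonneg; exact HS. }
assert (GEN : forall a0 b0 c0, is_rat a0 -> is_rat b0 -> is_rat c0 -> is_alg_int (vl theta a0 b0 c0) ->
   0 < vl theta a0 b0 c0 -> (forall n, Nf (IZR p) (IZR q) a0 b0 c0 ^ n <> 0) ->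
   forall n, 1 <= D^3 * Nf (IZR p) (IZR q) a0 b0 c0 ^ n).
{ intros a0 b0 c0 h1 h2 h3 h4 h5 h6 n.
  destruct (IN a0 b0 c0 h1 h2 h3 h4 n) as [z Ez].
  pose proof (Hpos a0 b0 c0 h5 n) as Hp.
  rewrite pw_N in Ez, Hp.
  assert (0 < IZR z).
  { rewrite <- Ez. apply Rmult_lt_0_compat. apply pow_lt; lra.
    destruct Hp as [Hp|Hp]; [exact Hp | exfalso; apply (h6 n); symmetry; exact Hp]. }
  apply lt_0_IZR in H. rewrite Ez. apply IZR_le. lia. }
set (nu := Nf (IZR p) (IZR q) (a 1%nat) (b 1%nat) (c 1%nat)).
set (nu' := Nf (IZR p) (IZR q) al be ga).
assert (Hprod : nu * nu' = 1).
{ unfold nu, nu'. rewrite <- Nmul.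
  destruct (uniq3 theta Hli
    (mulA (IZR p) (IZR q) (a 1%nat) (b 1%nat) (c 1%nat) al be ga)
    (mulB (IZR p) (IZR q) (a 1%nat) (b 1%nat) (c 1%nat) al be ga)
    (mulC (IZR p) (IZR q) (a 1%nat) (b 1%nat) (c 1%nat) al be ga) 1 0 0) as [E1 [E2 E3]].
  - unfold mulA; repeat first [apply rat_plus | apply rat_mult]; auto.
  - unfold mulB; repeat first [apply rat_plus | apply rat_mult]; auto.
  - unfold mulC; repeat first [apply rat_plus | apply rat_mult]; auto.
  - change 1 with (IZR 1); apply rat_IZR.
  - change 0 with (IZR 0); apply rat_IZR.
  - change 0 with (IZR 0); apply rat_IZR.
  - rewrite vl_mul by exact ft. unfold vl. rewrite Hv1, <- Hinv. field. exact ln0.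
  - rewrite E1, E2, E3. unfold Nf. ring. }
assert (Hnun : forall n, nu ^ n * nu' ^ n = 1) by (intro n; rewrite <- Rpow_mult_distr, Hprod; apply pow1).
assert (Hl0 : 0 < lambda) by lra.
assert (Hv1' : vl theta (a 1%nat) (b 1%nat) (c 1%nat) = lambda) by exact Hv1.
assert (Hinv' : vl theta al be ga = / lambda) by (symmetry; exact Hinv).
assert (B1 : forall n, 1 <= D^3 * nu ^ n).
{ apply GEN; auto. rewrite Hv1'. exact Halg. lra.
  intros n H. fold nu in H. specialize (Hnun n). rewrite H in Hnun. lra. }
assert (B2 : forall n, 1 <= D^3 * nu' ^ n).
{ apply GEN; auto. rewrite Hinv'. exact Halg'. rewrite Hinv'. apply Rinv_0_lt_compat; lra.
  intros n H. fold nu' in H. specialize (Hnun n). rewrite H in Hnun. lra. }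
assert (nu_pos : 0 < nu).
{ pose proof (Hpos _ _ _ (eq_ind_r (fun x => 0 < x) Hl0 Hv1') 1%nat) as H.
  rewrite pw_N, pow_1 in H. fold nu in H. destruct H as [H|H]; [exact H|].
  specialize (Hnun 1%nat). rewrite pow_1, <- H in Hnun. lra. }
assert (nu'_pos : 0 < nu').
{ assert (0 < nu * nu') by lra. nra. }
assert (C1 : forall n, nu ^ n <= D^3).
{ intro n. specialize (B2 n). specialize (Hnun n).
  assert (0 < nu ^ n) by (apply pow_lt; lra).
  assert (nu^n * 1 <= nu^n * (D^3 * nu'^n)) by (apply Rmult_le_compat_l; lra).
  assert (nu^n * (D^3 * nu'^n) = D^3 * (nu^n * nu'^n)) by ring.
  rewrite Hnun in *. lra. }
assert (C2 : forall n, nu' ^ n <= D^3).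
{ intro n. specialize (B1 n). specialize (Hnun n).
  assert (0 < nu' ^ n) by (apply pow_lt; lra).
  assert (nu'^n * 1 <= nu'^n * (D^3 * nu^n)) by (apply Rmult_le_compat_l; lra).
  assert (nu'^n * (D^3 * nu^n) = D^3 * (nu^n * nu'^n)) by ring.
  rewrite Hnun in *. lra. }
assert (nu1 : nu = 1).
{ destruct (Rtotal_order nu 1) as [h|[h|h]]; [exfalso| exact h | exfalso].
  - apply (pow_bounded_gt1 nu' (D^3)); [nra | exact C2].
  - apply (pow_bounded_gt1 nu (D^3)); [exact h | exact C1]. }
assert (key : forall n, (1 <= n)%nat -> exists (e g : R) (Az Bz : Z),
      k n * (3 * theta^2 - IZR p) = D * (lambda^n + g + e * theta) /\ k n * theta = IZR Bz + D * e /\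
      k n * theta^2 = IZR Az + D * g /\
      (g^2 - theta*e*g + (theta^2 - IZR p)*e^2) * lambda^n = 1).
{ intros n hn.
  destruct (Habc n hn) as [ran [rbn [rcn Hvn]]].
  destruct (pw_rat (IZR p) (IZR q) (a 1%nat) (b 1%nat) (c 1%nat) n rp rq ra1 rb1 rc1) as [r1 [r2 r3]].
  destruct (uniq3 theta Hli (a n) (b n) (c n) (pA (IZR p) (IZR q) (a 1%nat) (b 1%nat) (c 1%nat) n)
     (pB (IZR p) (IZR q) (a 1%nat) (b 1%nat) (c 1%nat) n) (pC (IZR p) (IZR q) (a 1%nat) (b 1%nat) (c 1%nat) n))
     as [Ea [Eb Ec]]; auto.
  { rewrite pw_val by exact ft. rewrite Hv1'. exact Hvn. }
  destruct (IP (a 1%nat) (b 1%nat) (c 1%nat) ra1 rb1 rc1 ltac:(rewrite Hv1'; exact Halg) n)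
     as [A [B [C [E1 [E2 E3]]]]].
  assert (Nn : Nf (IZR p) (IZR q) (a n) (b n) (c n) = 1).
  { rewrite Ea, Eb, Ec, pw_N. fold nu. rewrite nu1. apply pow1. }
  rewrite (NG theta (IZR p) (IZR q)) in Nn by exact ft.
  exists (c n * theta - b n), (c n * theta^2 - a n - IZR p * c n), (A + p * C)%Z, B.
  assert (Da : D * a n = IZR A) by (rewrite Ea, E1; field; lra).
  assert (Db : D * b n = IZR B) by (rewrite Eb, E2; field; lra).
  assert (Dc : D * c n = IZR C) by (rewrite Ec, E3; field; lra).
  unfold k. fold D.
  split; [| split; [| split]].
  - rewrite <- Hvn. ring.
  - rewrite <- Db. ring.
  - rewrite plus_IZR, mult_IZR, <- Da, <- Dc. ring.
  - rewrite <- Hvn. rewrite <- Nn. unfold vl, Gq. ring. }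
exact (analysis_part theta (IZR p) D lambda k HS HDd HD Hlam key).
Qed.
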